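(* The properties ''$X$ is isomorphic to a subspace of $c_0$'' and ''$X$ is isomorphic to a subspace of $\ell_\infty$'' are open for the Kadets distance: if a Banach space $X$ is isomorphic to a subspace of $c_0$ (respectively of $\ell_\infty$), then there exists $\epsilon>0$ such that every Banach space $Y$ with $d_K(X,Y)<\epsilon$ is isomorphic to a subspace of $c_0$ (respectively of $\ell_\infty$).
   Context: The Kadets distance $d_K(X,Y)$ is the infimum, over all Banach spaces $Z$ and linear isometric embeddings $U:X\to Z$, $V:Y\to Z$, of the Hausdorff distance in $Z$ between $UB_X$ and $VB_Y$, where $B_X,B_Y$ are closed unit balls. *)

(* Defs.v *)
From HB Require Import structures.
From mathcomp Require Import all_boot all_order all_algebra.
From mathcomp Require Import all_classical all_reals all_analysis.
Set Implicit Arguments. Unset Strict Implicit. Unset Printing Implicit Defensive.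
Import Order.TTheory GRing.Theory Num.Theory.
Import numFieldNormedType.Exports.
Local Open Scope classical_set_scope.
Local Open Scope ring_scope.

Definition unit_ball {R : realType} (X : normedModType R) : set X :=
  [set x | `|x| <= 1].

Definition pt_set_dist {R : realType} (Z : normedModType R) (a : Z) (B : set Z)
  : \bar R := ereal_inf [set (`|a - b|)%:E | b in B].

Definition hausdorff_dist {R : realType} (Z : normedModType R) (A B : set Z)
  : \bar R :=
  maxe (ereal_sup [set pt_set_dist a B | a in A])
       (ereal_sup [set pt_set_dist b A | b in B]).

Definition lin_isometry {R : realType} (X Z : normedModType R) (U : {linear X -> Z}) :=
  forall x : X, `|U x| = `|x|.

Definition kadets_dist {R : realType} (X Y : completeNormedModType R) : \bar R :=
  ereal_inf [set r | exists (Z : completeNormedModType R)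
                       (U : {linear X -> Z}) (V : {linear Y -> Z}),
                       lin_isometry U /\ lin_isometry V /\
                       r = hausdorff_dist (U @` @unit_ball R X) (V @` @unit_ball R Y)].

Definition sup_norm {R : realType} (f : nat -> R) : \bar R :=
  ereal_sup (range (fun n => (`|f n|)%:E)).

Definition seq_linear {R : realType} (X : normedModType R) (T : X -> nat -> R) :=
  forall (a : R) (x y : X) (n : nat), T (a *: x + y) n = a * T x n + T y n.

Definition sup_norm_iso {R : realType} (X : normedModType R) (T : X -> nat -> R) :=
  exists c C : R, 0 < c /\ 0 < C /\
    forall x : X, ((c * `|x|)%:E <= sup_norm (T x))%E /\
                  (sup_norm (T x) <= (C * `|x|)%:E)%E.

Definition iso_subspace_linf {R : realType} (X : normedModType R) : Prop :=
  exists T : X -> nat -> R, seq_linear T /\ sup_norm_iso T.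

Definition iso_subspace_c0 {R : realType} (X : normedModType R) : Prop :=
  exists T : X -> nat -> R, seq_linear T /\ sup_norm_iso T /\
    forall x : X, T x @ \oo --> (0 : R).

(* Main.v *)
Require Import Defs.
From HB Require Import structures.
From mathcomp Require Import all_boot all_order all_algebra.
From mathcomp Require Import all_classical all_reals all_analysis.
From mathcomp Require Import ring lra.
Import Order.TTheory GRing.Theory Num.Theory.
Import numFieldNormedType.Exports.
Local Open Scope ring_scope.

Module KadetsAux.
Set Implicit Arguments. Unset Strict Implicit. Unset Printing Implicit Defensive.
Local Open Scope classical_set_scope.

Lemma zmod_aux (V : zmodType) (d1 d2 a b : V) : d1 + a = d2 + b -> a - b = d2 - d1.
Proof.
move=> E; apply: (@addrI _ d1).
by rewrite addrA E addrK addrC subrK.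
Qed.

Section HahnBanach.
Variables (R : realType) (Z : normedModType R) (K : R).

Definition lin_graph (G : set (Z * R)) :=
  [/\ (forall z r r', G (z, r) -> G (z, r') -> r = r'),
      (forall a z1 r1 z2 r2, G (z1, r1) -> G (z2, r2) ->
          G (a *: z1 + z2, a * r1 + r2)) &
      (forall z r, G (z, r) -> r <= K * `|z|)].

Lemma lin_graph_scale G a z r : lin_graph G -> G (0, 0) -> G (z, r) ->
  G (a *: z, a * r).
Proof.
move=> [_ Gl _] G00 Gzr.
by have := Gl a _ _ _ _ Gzr G00; rewrite addr0 addr0.
Qed.

Lemma lin_graph_sub G z1 r1 z2 r2 : lin_graph G -> G (z1, r1) -> G (z2, r2) ->
  G (z2 - z1, r2 - r1).
Proof.
move=> [_ Gl _] G1 G2.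
by have := Gl (-1) _ _ _ _ G1 G2; rewrite scaleN1r mulN1r addrC [_ + r2]addrC.
Qed.

Lemma lin_graph_ext G z0 : 0 <= K -> lin_graph G -> G (0, 0) -> ~ (exists r, G (z0, r)) ->
  exists G', [/\ lin_graph G', G `<=` G' & exists r, G' (z0, r)].
Proof.
move=> K0 LG G00 nz0.
have [Gf Gl Gb] := LG.
pose S := [set x | exists d r, G (d, r) /\ x = r - K * `|d - z0|].
have key d r d' r' : G (d, r) -> G (d', r') -> r - K * `|d - z0| <= K * `|d' + z0| - r'.
  move=> G1 G2.
  have := Gb _ _ (Gl 1 _ _ _ _ G1 G2); rewrite scale1r mul1r => h.
  have h2 : K * `|d + d'| <= K * `|d - z0| + K * `|d' + z0|.
    rewrite -mulrDr ler_wpM2l //.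
    have -> : d + d' = (d - z0) + (d' + z0) by rewrite addrCA subrK addrC.
    exact: ler_normD.
  lra.
have hS : has_sup S.
  split; first by exists (0 - K * `|0 - z0|), 0, 0.
  exists (K * `|0 + z0| - 0) => x [d [r [Gdr ->]]].
  exact: key Gdr G00.
pose al := sup S.
have i d r : G (d, r) -> r - K * `|d - z0| <= al.
  by move=> Gdr; apply: sup_upper_bound => //; exists d, r.
have ii d r : G (d, r) -> al <= K * `|d + z0| - r.
  move=> Gdr; apply: ge_sup; first by case: hS.
  by move=> x [d1 [r1 [G1 ->]]]; exact: key G1 Gdr.
pose G' := [set p : Z * R | exists d r t, G (d, r) /\ p = (d + t *: z0, r + t * al)].
exists G'; split.
- split.
  + move=> z r r' [d1 [r1 [t1 [G1 [-> ->]]]]] [d2 [r2 [t2 [G2 [E ->]]]]].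
    have [tt|tn] := eqVneq t1 t2.
      subst t2; move/addIr: E => E; subst d2.
      by rewrite (Gf _ _ _ G1 G2).
    exfalso; apply: nz0.
    have G3 := lin_graph_sub LG G1 G2.
    exists ((t1 - t2)^-1 * (r2 - r1)).
    have -> : z0 = (t1 - t2)^-1 *: (d2 - d1).
      apply: (@scalerI _ _ (t1 - t2)); first by rewrite subr_eq0.
      rewrite scalerA divff ?subr_eq0 // scale1r scalerBl.
      exact: zmod_aux.
    exact: lin_graph_scale.
  + move=> a z1 r1 z2 r2 [d1 [s1 [t1 [G1 [-> ->]]]]] [d2 [s2 [t2 [G2 [-> ->]]]]].
    exists (a *: d1 + d2), (a * s1 + s2), (a * t1 + t2); split; first exact: Gl.
    congr (_, _).
      by rewrite scalerDr scalerA scalerDl addrACA.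
    by rewrite mulrDr mulrA mulrDl addrACA.
  + move=> z r [d [s [t [Gds [-> ->]]]]].
    have [t0|tn0] := eqVneq t 0.
      by rewrite t0 scale0r mul0r !addr0; exact: Gb.
    case: (ltrgtP t 0) => [tlt|tgt|/eqP]; last by rewrite (negbTE tn0).
    *
      have sp : 0 < - t by rewrite oppr_gt0.
      have := i _ _ (lin_graph_scale (- t)^-1 LG G00 Gds).
      have -> : (- t)^-1 *: d - z0 = (- t)^-1 *: (d + t *: z0).
        by rewrite scalerDr scalerA invrN mulNr (mulVf tn0) scaleN1r.
      rewrite normrZ gtr0_norm ?invr_gt0 // mulrCA -mulrBr.
      rewrite -(ler_pM2l sp) mulrA divff ?lt0r_neq0 // mul1r.
      rewrite lerBlDr mulNr; lra.
    *
      have := ii _ _ (lin_graph_scale t^-1 LG G00 Gds).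
      have -> : t^-1 *: d + z0 = t^-1 *: (d + t *: z0).
        by rewrite scalerDr scalerA mulVf ?scale1r.
      rewrite normrZ gtr0_norm ?invr_gt0 // mulrCA -mulrBr.
      rewrite -(ler_pM2l tgt) mulrA divff ?lt0r_neq0 // mul1r.
      by rewrite lerBrDr mulrC addrC.
- move=> [z r] Gzr; exists z, r, 0; split => //.
  by rewrite scale0r mul0r !addr0.
- exists (0 + 1 * al), 0, 0, 1; split => //; congr pair; by rewrite add0r scale1r.
Qed.

Lemma hahn_banach (G0 : set (Z * R)) : 0 <= K -> lin_graph G0 -> G0 (0, 0) ->
  exists F : Z -> R, [/\ (forall a x y, F (a *: x + y) = a * F x + F y),
    (forall z r, G0 (z, r) -> F z = r) & (forall z, `|F z| <= K * `|z|)].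
Proof.
move=> K0 LG0 G00.
pose T := {G : set (Z * R) | lin_graph G /\ G0 `<=` G}.
have t0 : T := exist _ G0 (conj LG0 (@subset_refl _ G0)).
pose Rl (A B : T) := `[< sval A `<=` sval B >].
have [M Mmax] : exists M : T, premaximal Rl M.
  apply: (ZL_preorder t0).
  - by move=> A; apply/asboolP.
  - by move=> A B C /asboolP AB /asboolP BC; apply/asboolP; exact: subset_trans AB BC.
  - move=> A Atot.
    case: (pselect (exists g, A g)) => [[g Ag]|nA]; last first.
      by exists t0 => s As; exfalso; apply: nA; exists s.
    pose U := [set p | exists g, A g /\ sval g p].
    have LU : lin_graph U.
      split.
      + move=> z r r' [g1 [A1 H1]] [g2 [A2 H2]].
        case: (Atot g1 g2 A1 A2) => /asboolP sub.
          by have [f _ _] := proj1 (svalP g2); exact: f (sub _ H1) H2.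
        by have [f _ _] := proj1 (svalP g1); exact: f H1 (sub _ H2).
      + move=> a z1 r1 z2 r2 [g1 [A1 H1]] [g2 [A2 H2]].
        case: (Atot g1 g2 A1 A2) => /asboolP sub.
          by exists g2; split => //; have [_ l _] := proj1 (svalP g2); exact: l (sub _ H1) H2.
        by exists g1; split => //; have [_ l _] := proj1 (svalP g1); exact: l H1 (sub _ H2).
      + move=> z r [g1 [A1 H1]].
        by have [_ _ b] := proj1 (svalP g1); exact: b H1.
    have G0U : G0 `<=` U.
      by move=> p G0p; exists g; split => //; exact: (proj2 (svalP g)).
    by exists (exist _ U (conj LU G0U)) => s As; apply/asboolP => p sp; exists s.
have [LM G0M] := svalP M.
have [Mf Ml Mb] := LM.
have M00 : sval M (0, 0) by exact: G0M.
have DM z : exists r, sval M (z, r).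
  apply: contrapT => nD.
  have [G' [LG' MG' [r G'r]]] := lin_graph_ext K0 LM M00 nD.
  have G0G' : G0 `<=` G' by exact: subset_trans G0M MG'.
  have /asboolP := Mmax (exist _ G' (conj LG' G0G')) (asboolT MG').
  by move=> /= G'M; apply: nD; exists r; exact: G'M.
pose F z := xget 0 [set r | sval M (z, r)].
have FP z : sval M (z, F z) by exact: (xgetPex 0 (DM z)).
exists F; split.
- by move=> a x y; apply: Mf (FP _) (Ml _ _ _ _ _ (FP x) (FP y)).
- by move=> z r G0zr; apply: Mf (FP _) (G0M _ G0zr).
- move=> z; rewrite ler_norml; apply/andP; split; last exact: Mb (FP z).
  have := Mb _ _ (Ml (-1) _ _ _ _ (FP z) M00).
  by rewrite addr0 addr0 scaleN1r normrN mulN1r lerNl.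
Qed.

End HahnBanach.


Section Aux.
Variable R : realType.

Lemma sup_norm_ge (f : nat -> R) n : (`|f n|%:E <= sup_norm f)%E.
Proof. by apply: ereal_sup_ubound; exists n. Qed.

Lemma sup_norm_le (f : nat -> R) (M : R) :
  (forall n, `|f n| <= M) -> (sup_norm f <= M%:E)%E.
Proof. by move=> H; apply: ub_ereal_sup => _ [n _ <-]; rewrite lee_fin. Qed.

Lemma sup_norm_shift (h g : nat -> R) (k b : R) :
  (b%:E <= sup_norm h)%E -> (forall n, `|h n| <= `|g n| + k) ->
  ((b - k)%:E <= sup_norm g)%E.
Proof.
move=> hb hg.
case E: (sup_norm g) => [s| |]; last 2 first.
- exact: leey.
- by have := sup_norm_ge g 0; rewrite E.
have gs n : `|g n| <= s by rewrite -lee_fin -E; exact: sup_norm_ge.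
have : (sup_norm h <= (s + k)%:E)%E.
  by apply: sup_norm_le => n; apply: le_trans (hg n) _; rewrite lerD2r.
move=> /(le_trans hb); rewrite lee_fin lee_fin => H.
by rewrite lerBlDr.
Qed.

Lemma sup_norm_ub (f : nat -> R) (M : R) n :
  (sup_norm f <= M%:E)%E -> `|f n| <= M.
Proof. by move=> H; rewrite -lee_fin; apply: le_trans H; exact: sup_norm_ge. Qed.

Lemma linF_additive (Z : lmodType R) (F : Z -> R) :
  (forall a x y, F (a *: x + y) = a * F x + F y) ->
  [/\ F 0 = 0, forall x y, F (x + y) = F x + F y, forall x y, F (x - y) = F x - F y
    & forall a x, F (a *: x) = a * F x].
Proof.
move=> Fl.
have F0 : F 0 = 0.
  have := Fl 1 0 0; rewrite scale1r addr0 mul1r => h.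
  by apply: (@addrI _ (F 0)); rewrite addr0 -h.
have FD x y : F (x + y) = F x + F y by rewrite -[x]scale1r Fl mul1r scale1r.
have FZ a x : F (a *: x) = a * F x by rewrite -[a *: x]addr0 Fl F0 addr0.
split => // x y; by rewrite FD -scaleN1r FZ mulN1r.
Qed.

End Aux.

Lemma kadets_approx (R : realType) (X Y : completeNormedModType R) (eps : R) :
  (kadets_dist X Y < eps%:E)%E ->
  exists (Z : completeNormedModType R) (U : {linear X -> Z}) (V : {linear Y -> Z}),
    [/\ lin_isometry U, lin_isometry V &
      forall y : Y, `|y| <= 1 -> exists x : X, `|x| <= 1 /\ `|V y - U x| < eps].
Proof.
move=> /ereal_inf_lt [r [Z [U [V [iU [iV ->]]]]] hlt].
exists Z, U, V; split => // y y1.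
move: hlt; rewrite /hausdorff_dist gt_max => /andP [_ h2].
have : (pt_set_dist (V y) (U @` @unit_ball R X) < eps%:E)%E.
  apply: le_lt_trans h2; apply: ereal_sup_ubound.
  by exists (V y) => //; exists y.
move=> /ereal_inf_lt [_ [_ [x x1 <-] <-]]; rewrite lte_fin => h.
by exists x.
Qed.


Section Core.
Variables (R : realType) (X Y Z : normedModType R).
Variables (U : {linear X -> Z}) (V : {linear Y -> Z}).
Hypotheses (iU : lin_isometry U) (iV : lin_isometry V).
Variables (T : X -> nat -> R) (c C eps : R).
Hypotheses (Tlin : seq_linear T) (c0 : 0 < c) (C0 : 0 < C) (eps0 : 0 < eps)
  (Tlow : forall x, ((c * `|x|)%:E <= sup_norm (T x))%E)
  (Tup : forall x, (sup_norm (T x) <= (C * `|x|)%:E)%E)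
  (approx : forall y, `|y| <= 1 -> exists x, `|x| <= 1 /\ `|V y - U x| < eps).

Lemma approx_scaled y : exists x, `|x| <= `|y| /\ `|V y - U x| <= eps * `|y|.
Proof.
have [->|y0] := eqVneq y 0.
  by exists 0; rewrite !linear0 addr0 !normr0 mulr0.
have ny : 0 < `|y| by rewrite normr_gt0.
have h1 : `|(`|y|^-1 *: y)| <= 1.
  by rewrite normrZ normfV normr_id mulVf ?lt0r_neq0.
have [x [x1 hx]] := approx h1.
exists (`|y| *: x); split.
  by rewrite normrZ normr_id -{2}[`|y|]mulr1 ler_wpM2l // ltW.
have -> : V y - U (`|y| *: x) = `|y| *: (V (`|y|^-1 *: y) - U x).
  by rewrite !linearZ /= scalerBr scalerA divff ?lt0r_neq0 // scale1r scalerN.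
by rewrite normrZ normr_id mulrC ler_wpM2r // ?ltW.
Qed.

Lemma T_bound x n : `|T x n| <= C * `|x|.
Proof. exact: sup_norm_ub (Tup x). Qed.

Lemma T_sub x x' n : T (x - x') n = T x n - T x' n.
Proof.
have := Tlin (-1) x' x n; rewrite scaleN1r mulN1r addrC => ->.
by rewrite addrC.
Qed.

Lemma exists_F : exists F : nat -> Z -> R,
  [/\ (forall n a x y, F n (a *: x + y) = a * F n x + F n y),
      (forall n x, F n (U x) = T x n) & (forall n z, `|F n z| <= C * `|z|)].
Proof.
have H n : exists Fn : Z -> R,
  [/\ (forall a x y, Fn (a *: x + y) = a * Fn x + Fn y),
      (forall x, Fn (U x) = T x n) & (forall z, `|Fn z| <= C * `|z|)].
  pose G0 := [set p : Z * R | exists x, p = (U x, T x n)].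
  have LG : lin_graph C G0.
    split.
    - move=> z r r' [x [-> ->]] [x' [E ->]].
      have : x = x'.
        apply/eqP; rewrite -subr_eq0 -normr_eq0 -iU linearB /= E subrr normr0 //.
      by move=> ->.
    - move=> a z1 r1 z2 r2 [x1 [-> ->]] [x2 [-> ->]].
      by exists (a *: x1 + x2); rewrite linearP Tlin.
    - move=> z r [x [-> ->]]; rewrite iU.
      exact: le_trans (ler_norm _) (T_bound x n).
  have G00 : G0 (0, 0).
    exists 0; rewrite linear0; congr pair.
    have := Tlin 1 0 0 n; rewrite scale1r addr0 mul1r => h.
    by apply: (@addrI _ (T 0 n)); rewrite addr0 -h.
  have [F [Fl FG Fb]] := hahn_banach (ltW C0) LG G00.
  exists F; split => // x; apply: FG; by exists x.
have [F HF] := choice H.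
exists F; split => n; by have [] := HF n.
Qed.

Variable F : nat -> Z -> R.
Hypotheses (Flin : forall n a x y, F n (a *: x + y) = a * F n x + F n y)
  (FU : forall n x, F n (U x) = T x n) (Fb : forall n z, `|F n z| <= C * `|z|).

Lemma F_lower y :
  (((c - (c + C) * eps) * `|y|)%:E <= sup_norm (fun n => F n (V y)))%E.
Proof.
have [x [xy hx]] := approx_scaled y.
have h1 : (1 - eps) * `|y| <= `|x|.
  have := ler_normD (U x) (V y - U x); rewrite addrC subrK iU iV.
  have : 0 <= `|y| by [].
  lra.
have hn : forall n, `|T x n| <= `|F n (V y)| + C * (eps * `|y|).
  move=> n; rewrite -FU.
  have [_ _ Fs _] := linF_additive (Flin n).
  have -> : U x = V y - (V y - U x) by rewrite opprB addrC subrK.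
  rewrite Fs.
  apply: le_trans (ler_normB _ _) _.
  rewrite lerD2l; apply: le_trans (Fb _ _) _.
  by rewrite ler_wpM2l // ltW.
have := sup_norm_shift (Tlow x) hn.
apply: le_trans; rewrite lee_fin.
have : c * ((1 - eps) * `|y|) <= c * `|x| by rewrite ler_wpM2l // ltW.
nra.
Qed.

Lemma F_upper y : (sup_norm (fun n => F n (V y)) <= (C * `|y|)%:E)%E.
Proof. by apply: sup_norm_le => n; rewrite -iV. Qed.

Lemma F_seq_linear : seq_linear (fun y n => F n (V y)).
Proof. by move=> a x y n /=; rewrite linearP Flin. Qed.


End Core.


Lemma eps_facts (R : realType) (c C : R) : 0 < c -> 0 < C ->
  [/\ 0 < c / (8 * (c + 3 * C)), c / (8 * (c + 3 * C)) <= 1/8,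
      0 < c - (c + C) * (c / (8 * (c + 3 * C)))
    & 0 < c - (c + 3 * C) * (c / (8 * (c + 3 * C)))].
Proof.
move=> c0 C0.
have pos : 0 < c + 3 * C by lra.
have e : (c + 3 * C) * (c / (8 * (c + 3 * C))) = c / 8.
  by field; lra.
have ep : 0 < c / (8 * (c + 3 * C)) by apply: divr_gt0 => //; lra.
split => //.
- rewrite ler_pdivrMr; last lra.
  have -> : 1 / 8 * (8 * (c + 3 * C)) = c + 3 * C by field.
  lra.
- have : (c + C) * (c / (8 * (c + 3 * C))) <= (c + 3 * C) * (c / (8 * (c + 3 * C))).
    by rewrite ler_wpM2r ?ltW //; lra.
  lra.
- lra.
Qed.

Lemma linf_part (R : realType) (X : completeNormedModType R) :
  iso_subspace_linf X ->
     exists eps : R, 0 < eps /\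
       forall Y : completeNormedModType R,
         (kadets_dist X Y < eps%:E)%E -> iso_subspace_linf Y.
Proof.
move=> [T [Tl [c [C [c0 [C0 Tb]]]]]].
have [ep _ pos _] := eps_facts c0 C0.
exists (c / (8 * (c + 3 * C))); split => // Y hK.
have [Z [U [V [iU iV app]]]] := kadets_approx hK.
have Tlow x := (Tb x).1.
have Tup x := (Tb x).2.
have [F [Fl FU Fb]] := exists_F iU Tl C0 Tup.
exists (fun y n => F n (V y)); split; first exact: F_seq_linear.
exists (c - (c + C) * (c / (8 * (c + 3 * C)))), C; split => //; split => // y.
  split; first exact: (F_lower iU iV c0 C0 Tlow app Fl FU Fb).
exact: (F_upper iV Fb).
Qed.


Section Comb.
Variables (R : realType) (Y : normedModType R) (d : nat -> Y).

Definition comb m (l : nat -> R) : Y := \sum_(j < m) l j *: d j.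

Lemma comb0 l : comb 0 l = 0.
Proof. by rewrite /comb big_ord0. Qed.

Lemma comb_recr m l : comb m.+1 l = comb m l + l m *: d m.
Proof. by rewrite /comb big_ord_recr. Qed.

Lemma comb_same a m l1 l2 :
  a *: comb m l1 + comb m l2 = comb m (fun j => a * l1 j + l2 j).
Proof.
rewrite /comb scaler_sumr -big_split /=; apply: eq_bigr => j _.
by rewrite scalerA scalerDl.
Qed.

Lemma comb_scale a m l : a *: comb m l = comb m (fun j => a * l j).
Proof.
have := comb_same a m l (fun => 0); rewrite (_ : comb m (fun=> 0) = 0) ?addr0.
  by move=> ->; apply: eq_bigr => j _; rewrite addr0.
by rewrite /comb big1 // => j _; rewrite scale0r.
Qed.

Lemma comb_widen m M l : (m <= M)%N ->
  comb m l = comb M (fun j => if (j < m)%N then l j else 0).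
Proof.
move=> mM; rewrite /comb (big_ord_widen M (fun j => l j *: d j) mM) big_mkcond.
by apply: eq_bigr => j _; case: ifP => _ //; rewrite scale0r.
Qed.

Lemma comb_lin a m1 l1 m2 l2 :
  exists m l, a *: comb m1 l1 + comb m2 l2 = comb m l.
Proof.
exists (maxn m1 m2).
rewrite (comb_widen l1 (leq_maxl m1 m2)) (comb_widen l2 (leq_maxr m1 m2)).
by eexists; rewrite comb_same.
Qed.

Lemma comb_single p : comb p.+1 (fun j => if j == p then 1 else 0) = d p.
Proof.
rewrite comb_recr eqxx scale1r /comb big1 ?add0r // => j _.
by rewrite (_ : (j : nat) == p = false) ?scale0r // ltn_eqF.
Qed.

End Comb.


Section C0a.
Variables (R : realType) (X Y Z : normedModType R).
Variables (U : {linear X -> Z}) (V : {linear Y -> Z}).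
Hypotheses (iU : lin_isometry U) (iV : lin_isometry V).
Variables (T : X -> nat -> R) (c C eps : R).
Hypotheses (Tlin : seq_linear T) (c0 : 0 < c) (C0 : 0 < C) (eps0 : 0 < eps)
  (eps8 : eps <= 1/8)
  (Tlow : forall x, ((c * `|x|)%:E <= sup_norm (T x))%E)
  (Tup : forall x, (sup_norm (T x) <= (C * `|x|)%:E)%E)
  (Tc0 : forall x, T x @ \oo --> (0 : R))
  (approx : forall y, `|y| <= 1 -> exists x, `|x| <= 1 /\ `|V y - U x| < eps).

Lemma Tc0_ev x (eta : R) : 0 < eta -> exists N, forall n, (N <= n)%N -> `|T x n| <= eta.
Proof.
move=> e0; have /cvgrPdist_le /(_ eta e0) [N _ HN] := Tc0 x.
by exists N => n /HN; rewrite sub0r normrN.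
Qed.

Definition grid_ok (k : nat) (s : seq int) (x : X) :=
  forall n, `|T x n - (nth 0 s n)%:~R / (k.+1)%:R| <= (k.+1)%:R^-1.

Lemma grid_exists x k : exists s, grid_ok k s x.
Proof.
have K0 : 0 < (k.+1)%:R :> R by rewrite ltr0n.
have iK0 : 0 < (k.+1)%:R^-1 :> R by rewrite invr_gt0.
have [N HN] := Tc0_ev x iK0.
exists (mkseq (fun n => Num.floor (T x n * (k.+1)%:R)) N) => n.
have [nN|Nn] := ltnP n N.
  rewrite nth_mkseq //.
  set t := T x n; set K := (k.+1)%:R : R.
  have := floor_itv (t * K); rewrite intrD => /andP [h1 h2].
  have -> : t - (Num.floor (t * K))%:~R / K = (t * K - (Num.floor (t * K))%:~R) / K.
    by field; rewrite lt0r_neq0.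
  rewrite normrM normfV (gtr0_norm K0) -[X in _ <= X]mul1r ler_pM2r ?invr_gt0 //.
  by rewrite ler_norml; apply/andP; split; lra.
rewrite nth_default ?size_mkseq // mul0r subr0.
exact: HN.
Qed.

Definition Pw (i : seq int * nat) (y : Y) :=
  `|y| <= 1 /\ exists x, `|V y - U x| <= eps /\ grid_ok i.2 i.1 x.

Definition ww i := xget 0 (Pw i).

Definition dd (j : nat) : Y :=
  match @unpickle (seq int * nat)%type j with Some i => ww i | None => 0 end.

Lemma base_approx y : `|y| <= 1 -> exists m l, `|y - comb dd m l| <= 1/2.
Proof.
move=> y1.
have [x [x1 hx]] := approx y1.
pose k := Num.Def.trunc (8 / c).
have kgt := truncnS_gt (8 / c).
rewrite -/k in kgt.
set K := (k.+1)%:R : R in kgt.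
have K0 : 0 < K by rewrite ltr0n.
have [s hs] := grid_exists x k.
have Pi : Pw (s, k) y by split => //; exists x; split => //; exact: ltW.
have [_ [x' [hx' hs']]] : Pw (s, k) (ww (s, k)) by exact: (xgetPex 0 (ex_intro _ y Pi)).
have hT n : `|T (x - x') n| <= 2 / K.
  rewrite T_sub //.
  have := hs n; have := hs' n; rewrite /= -/K => a b.
  set q := (nth 0 s n)%:~R / K in a b.
  have -> : T x n - T x' n = (T x n - q) - (T x' n - q) by ring.
  apply: le_trans (ler_normB _ _) _.
  have -> : 2 / K = K^-1 + K^-1 by field; rewrite lt0r_neq0.
  exact: lerD.
have hc : c * `|x - x'| <= 2 / K.
  rewrite -lee_fin; apply: le_trans (Tlow _) _.
  exact: sup_norm_le.
have hxx : `|x - x'| <= 1/4.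
  have cK : 8 < c * K.
    by move: kgt; rewrite ltr_pdivrMr // mulrC.
  have h1 : K * (c * `|x - x'|) <= 2.
    have -> : 2 = K * (2 / K) by field; rewrite lt0r_neq0.
    by rewrite ler_wpM2l // ltW.
  have : 0 <= (c * K - 8) * `|x - x'| by rewrite mulr_ge0 // subr_ge0 ltW.
  lra.
exists (pickle (s, k)).+1, (fun j => if j == pickle (s, k) then 1 else 0).
rewrite comb_single /dd pickleK.
rewrite -iV linearB /=.
have -> : V y - V (ww (s, k)) = (V y - U x) + U (x - x') + (U x' - V (ww (s, k))).
  by rewrite linearB /=; rewrite !addrA subrK addrNK.
apply: le_trans (ler_normD _ _) _.
have h3 : `|U x' - V (ww (s, k))| <= eps by rewrite distrC.
have := ler_normD (V y - U x) (U (x - x')).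
rewrite iU.
move=> h; apply: le_trans (lerD h h3) _; apply: le_trans (lerD (lerD (ltW hx) hxx) (lexx eps)) _; have e2 : eps + 1/4 + eps <= 1/2 :> R by move: eps8; lra. exact: e2.
Qed.

Lemma iter_approx k y : `|y| <= 1 -> exists m l, `|y - comb dd m l| <= (2^-1) ^+ k.
Proof.
elim: k y => [|k IH] y y1.
  by exists 0%N, (fun => 0); rewrite comb0 subr0 expr0.
have [m1 [l1 h1]] := base_approx y1.
have v1 : `|2 *: (y - comb dd m1 l1)| <= 1.
  rewrite normrZ ger0_norm //; move: h1; lra.
have [m2 [l2 h2]] := IH _ v1.
have [m [l E]] := comb_lin dd (2^-1) m2 l2 m1 l1.
exists m, l; rewrite -E.
have -> : y - (2^-1 *: comb dd m2 l2 + comb dd m1 l1) =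
          2^-1 *: (2 *: (y - comb dd m1 l1) - comb dd m2 l2).
  rewrite scalerBr scalerA mulVf ?pnatr_eq0 // scale1r.
  by rewrite opprD addrA addrAC.
rewrite normrZ ger0_norm ?invr_ge0 // exprS.
by rewrite ler_wpM2l ?invr_ge0.
Qed.

Lemma density y (eta : R) : 0 < eta -> exists m l, `|y - comb dd m l| <= eta.
Proof.
move=> e0.
set a := `|y| + 1.
have a0 : 0 < a by rewrite /a ltr_pwDr.
have y1 : `|a^-1 *: y| <= 1.
  rewrite normrZ normfV gtr0_norm // ler_pdivrMl //; rewrite /a; lra.
have [k hk] : exists k : nat, (2^-1) ^+ k <= eta / a.
  have ea : 0 < eta / a by rewrite divr_gt0.
  exists (Num.Def.trunc (a / eta)).
  set k := Num.Def.trunc (a / eta).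
  have kgt := truncnS_gt (a / eta); rewrite -/k in kgt.
  have h2 : ((k.+1)%:R : R) <= 2 ^+ k.
    by rewrite -natrX ler_nat ltn_expl.
  rewrite exprVn.
  rewrite -[X in _ <= X]invrK ler_pV2 ?inE ?unitfE ?exprn_gt0 ?invr_gt0 ?lt0r_neq0 //.
    rewrite invf_div; apply: le_trans h2; exact: ltW. idtac.
  by rewrite invr_gt0.
have [m [l h]] := iter_approx k y1.
have [m' [l' E]] := comb_lin dd a m l 0 (fun => 0).
exists m', l'; rewrite -E comb0 addr0.
have -> : y - a *: comb dd m l = a *: (a^-1 *: y - comb dd m l).
  by rewrite scalerBr scalerA divff ?lt0r_neq0 // scale1r.
rewrite normrZ gtr0_norm //.
have -> : eta = a * (eta / a) by field; rewrite lt0r_neq0.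
rewrite ler_wpM2l ?(ltW a0) //; exact: le_trans h hk.
Qed.

End C0a.


Lemma finite_max (P : nat -> nat -> Prop) :
  (forall i, exists N, forall n, (N <= n)%N -> P i n) ->
  forall K, exists N, forall i, (i <= K)%N -> forall n, (N <= n)%N -> P i n.
Proof.
move=> H; elim=> [|K [N1 HN1]].
  have [N HN] := H 0%N; exists N => i; rewrite leqn0 => /eqP -> //.
have [N2 HN2] := H K.+1; exists (maxn N1 N2) => i iK n Nn.
move: iK; rewrite leq_eqVlt ltnS => /orP [/eqP ->|iK].
  by apply: HN2; exact: leq_trans (leq_maxr _ _) Nn.
by apply: HN1 => //; exact: leq_trans (leq_maxl _ _) Nn.
Qed.

Lemma zmod_aux2 (V : zmodType) (w e a b : V) : w + (e + b) = w + a + e + (b - a).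
Proof.
rewrite -!addrA; congr (w + _).
rewrite addrCA; congr (e + _).
by rewrite addrCA subrr addr0.
Qed.

Fixpoint mmf (N' : nat -> nat) (n : nat) : nat :=
  match n with
  | 0 => 0
  | n'.+1 => if (N' (mmf N' n').+1 <= n'.+1)%N then (mmf N' n').+1 else mmf N' n'
  end.

Lemma mmf_ok N' : N' 0%N = 0%N -> forall n, (N' (mmf N' n) <= n)%N.
Proof.
move=> N0; elim=> [|n IH] /=; first by rewrite N0.
by case: ifP => // _; exact: leq_trans IH (leqnSn n).
Qed.

Lemma mmf_S N' n : (mmf N' n <= mmf N' n.+1)%N.
Proof. by rewrite /=; case: ifP. Qed.

Lemma mmf_mono N' n n' : (n <= n')%N -> (mmf N' n <= mmf N' n')%N.
Proof.
move=> /subnKC <-; elim: (n' - n)%N => [|k IH]; first by rewrite addn0.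
by apply: leq_trans IH _; rewrite addnS; exact: mmf_S.
Qed.

Lemma mmf_unbounded N' j : exists n0, forall n, (n0 <= n)%N -> (j <= mmf N' n)%N.
Proof.
elim: j => [|j [n0 H0]]; first by exists 0%N.
exists (maxn n0 (N' j.+1)).+1 => n Hn.
apply: leq_trans _ (mmf_mono N' Hn).
set n1 := maxn n0 (N' j.+1).
have h1 : (j <= mmf N' n1)%N by apply: H0; exact: leq_maxl.
rewrite /=; case: ifP => hc.
  by rewrite ltnS.
move: h1; rewrite leq_eqVlt => /orP [/eqP ej|//].
have hN : (N' j.+1 <= n1.+1)%N by apply: leq_trans (leq_maxr n0 _) (leqnSn _).
by rewrite -ej hN in hc.
Qed.

Section C0b.
Variables (R : realType) (Y : normedModType R) (C delta : R).
Hypotheses (C0 : 0 < C) (delta0 : 0 < delta).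
Variable g : nat -> Y -> R.
Hypotheses (glin : forall n a x y, g n (a *: x + y) = a * g n x + g n y)
  (gb : forall n y, `|g n y| <= C * `|y|)
  (glim : forall y (eta : R), 0 < eta ->
     exists N, forall n, (N <= n)%N -> `|g n y| <= delta * `|y| + eta).
Variable d : nat -> Y.

Definition Qm m := forall (w : Y) (R0 eta : R), 0 < eta -> exists N, forall n, (N <= n)%N ->
  forall l, `|comb d m l| <= R0 -> `|g n (w + comb d m l)| <= delta * `|w + comb d m l| + eta.

Lemma Q0 : Qm 0.
Proof.
move=> w R0 eta e0; have [N HN] := glim w e0.
by exists N => n Nn l _; rewrite comb0 addr0; exact: HN.
Qed.

Lemma gD n x y : g n (x + y) = g n x + g n y.
Proof. by have [_ h _ _] := linF_additive (glin n). Qed.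

Lemma gZ n a x : g n (a *: x) = a * g n x.
Proof. by have [_ _ _ h] := linF_additive (glin n). Qed.

Lemma QS m : Qm m -> Qm m.+1.
Proof.
move=> IH w R0 eta e0.
set dm := d m.
have dC : 0 < delta + C by move: delta0 C0; lra.
case: (pselect (exists rho, 0 < rho /\ forall l, rho <= `|dm - comb d m l|)) =>
  [[rho [rho0 Hrho]]|Hn]; last first.
  have HB b : 0 < b -> exists l, `|dm - comb d m l| < b.
    move=> b0; apply: contrapT => nex; apply: Hn; exists b; split => // l.
    by rewrite leNgt; apply/negP => h; apply: nex; exists l.
  set b0 := eta / (2 * (delta + C)).
  have b00 : 0 < b0 by rewrite divr_gt0 // mulr_gt0.
  have e2 : 0 < eta / 2 by rewrite divr_gt0.
  have [N HN] := IH w (R0 + b0) (eta / 2) e2.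
  exists N => n Nn l hl.
  set t := l m; set e := comb d m l.
  have ht1 : 0 < `|t| + 1 by rewrite ltr_pwDr.
  have [l' hl'] := HB (b0 / (`|t| + 1)) (divr_gt0 b00 ht1).
  set u' := comb d m (fun j => t * l' j + l j).
  have Eu' : u' = t *: comb d m l' + e by rewrite comb_same.
  have Eu : comb d m.+1 l = e + t *: dm by rewrite comb_recr.
  have hdiff : `|comb d m.+1 l - u'| <= b0.
    rewrite Eu Eu' opprD addrA [e + _]addrC addrAC addrK -scalerBr normrZ.
    have : `|t| * `|dm - comb d m l'| <= `|t| * (b0 / (`|t| + 1)).
      by rewrite ler_wpM2l // ltW.
    move=> /le_trans; apply.
    rewrite mulrA ler_pdivrMr // mulrDr mulr1 [b0 * _]mulrC lerDl; exact: ltW.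
  have hu' : `|u'| <= R0 + b0.
    have := ler_normD (comb d m.+1 l) (u' - comb d m.+1 l).
    rewrite addrC subrK distrC => h.
    by apply: le_trans h _; apply: lerD.
  have := HN n Nn _ hu'.
  rewrite -/u' => hg.
  have -> : w + comb d m.+1 l = (w + u') + (comb d m.+1 l - u').
    by rewrite -addrA [u' + _]addrC subrK.
  rewrite gD.
  apply: le_trans (ler_normD _ _) _.
  have h1 := gb n (comb d m.+1 l - u').
  have h2 : `|w + u'| <= `|w + u' + (comb d m.+1 l - u')| + `|comb d m.+1 l - u'|.
    have := ler_normD (w + u' + (comb d m.+1 l - u')) (u' - comb d m.+1 l).
    have z : (comb d m.+1 l - u') + (u' - comb d m.+1 l) = 0 by rewrite addrA subrK subrr.
    by rewrite -addrA z addr0 [`|u' - _|]distrC.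
  have hb0 : (delta + C) * b0 = eta / 2 by rewrite /b0; field; rewrite lt0r_neq0.
  have : delta * `|w + u'| <= delta * (`|w + u' + (comb d m.+1 l - u')| + `|comb d m.+1 l - u'|).
    by rewrite ler_wpM2l // ltW.
  have : C * `|comb d m.+1 l - u'| <= C * b0 by rewrite ler_wpM2l // ltW.
  have : delta * `|comb d m.+1 l - u'| <= delta * b0 by rewrite ler_wpM2l // ltW.
  move: hg h1 hb0; lra.
set Tm := `|R0| / rho.
have Tm0 : 0 <= Tm by rewrite divr_ge0 // ltW.
have dm1 : 0 < `|dm| + 1 by rewrite ltr_pwDr.
set s := eta / (2 * (delta + C) * (`|dm| + 1)).
have s0 : 0 < s by rewrite divr_gt0 // !mulr_gt0.
set R1 := `|R0| + Tm * `|dm|.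
have e2 : 0 < eta / 2 by rewrite divr_gt0.
pose ti (i : nat) := i%:R * s - Tm.
have HI i : exists N, forall n, (N <= n)%N -> forall l, `|comb d m l| <= R1 ->
    `|g n ((w + ti i *: dm) + comb d m l)| <= delta * `|(w + ti i *: dm) + comb d m l| + eta / 2.
  exact: IH.
have [N HN] := finite_max HI (Num.Def.trunc (2 * Tm / s)).
exists N => n Nn l hl.
set t := l m; set e := comb d m l.
have Eu : comb d m.+1 l = e + t *: dm by rewrite comb_recr.
have ht : `|t| <= Tm.
  have : `|t| * rho <= `|comb d m.+1 l|.
    have [->|t0] := eqVneq t 0; first by rewrite normr0 mul0r.
    pose l1 := fun j => - t^-1 * l j.
    have -> : comb d m.+1 l = t *: (dm - comb d m l1).
      rewrite Eu /l1 -comb_scale scalerBr scalerA mulrN divff // scaleN1r opprK.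
      by rewrite addrC.
    by rewrite normrZ ler_wpM2l //; exact: Hrho.
  move=> h; rewrite /Tm ler_pdivlMr //.
  apply: le_trans h _; apply: le_trans hl _; exact: ler_norm.
have he : `|e| <= R1.
  have -> : e = comb d m.+1 l - t *: dm by rewrite Eu addrK.
  apply: le_trans (ler_normB _ _) _; rewrite normrZ.
  apply: lerD; first exact: le_trans hl (ler_norm _).
  by rewrite ler_wpM2r.
set x := (t + Tm) / s.
have x0 : 0 <= x.
  apply: divr_ge0; last exact: ltW.
  have := ler_norm (- t); rewrite normrN; lra.
set i := Num.Def.trunc x.
have /andP [hi1 hi2] := truncn_itv x0.
rewrite -/i in hi1 hi2.
have iK : (i <= Num.Def.trunc (2 * Tm / s))%N.
  apply: le_truncn; rewrite /x ler_pM2r ?invr_gt0 //.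
  have := ler_norm t; lra.
have hi := HN i iK n Nn l he.
have hti1 : ti i <= t.
  have : i%:R * s <= x * s by rewrite ler_pM2r.
  rewrite /x mulfVK ?lt0r_neq0 // /ti; lra.
have hti2 : t < ti i + s.
  have : x * s < (i.+1)%:R * s by rewrite ltr_pM2r.
  rewrite /x mulfVK ?lt0r_neq0 // /ti -natr1 mulrDl mul1r; lra.
have Ew : w + comb d m.+1 l = (w + ti i *: dm + e) + (t - ti i) *: dm.
  rewrite Eu (scalerBl t (ti i) dm); exact: zmod_aux2.
rewrite Ew gD gZ.
apply: le_trans (ler_normD _ _) _.
rewrite normrM.
have htt : `|t - ti i| <= s by rewrite ger0_norm; lra.
have h1 : `|t - ti i| * `|g n dm| <= s * (C * `|dm|).
  apply: ler_pM => //; exact: gb.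
have h2 : `|w + ti i *: dm + e| <= `|w + comb d m.+1 l| + s * `|dm|.
  rewrite Ew.
  have := ler_normD (w + ti i *: dm + e + (t - ti i) *: dm) (- ((t - ti i) *: dm)).
  rewrite addrK normrN normrZ => h; apply: le_trans h _.
  by rewrite lerD2l ler_wpM2r.
have h3 : delta * `|w + ti i *: dm + e| <= delta * (`|w + comb d m.+1 l| + s * `|dm|).
  by rewrite ler_wpM2l // ltW.
have hs : (delta + C) * s * (`|dm| + 1) = eta / 2.
  by rewrite /s; field; rewrite !lt0r_neq0.
have hdm : 0 <= `|dm| by [].
have : (delta + C) * s * `|dm| <= (delta + C) * s * (`|dm| + 1).
  apply: ler_wpM2l; first by apply: mulr_ge0; exact: ltW.
  by rewrite lerDl.
move: hi h1 h3 hs; rewrite -Ew; lra.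
Qed.

Lemma Qall m : Qm m.
Proof. elim: m => [|m IH]; [exact: Q0 | exact: QS]. Qed.

Lemma g0 n : g n 0 = 0.
Proof. by have [h _ _ _] := linF_additive (glin n). Qed.

Lemma comb_zero m : comb d m (fun => 0) = 0.
Proof. by rewrite /comb big1 // => j _; rewrite scale0r. Qed.

Lemma unif m : exists N, forall n, (N <= n)%N ->
  forall l, `|g n (comb d m l)| <= 2 * delta * `|comb d m l|.
Proof.
have [N HN] := Qall m 0 1 delta0.
exists N => n Nn l.
set u := comb d m l.
have [->|u0] := eqVneq u 0; first by rewrite g0 !normr0 mulr0.
have nu : 0 < `|u| by rewrite normr_gt0.
have E : comb d m (fun j => `|u|^-1 * l j) = `|u|^-1 *: u by rewrite -comb_scale.
have n1 : `|comb d m (fun j => `|u|^-1 * l j)| <= 1.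
  by rewrite E normrZ normfV normr_id mulVf ?lt0r_neq0.
have := HN n Nn _ n1; rewrite !add0r E normrZ normfV normr_id mulVf ?lt0r_neq0 //.
rewrite gZ normrM normfV normr_id mulr1 => h.
have -> : g n u = `|u| * (`|u|^-1 * g n u) by rewrite mulrA divff ?lt0r_neq0 // mul1r.
rewrite normrM normr_id mulrC ler_pM2r //.
by move: h; rewrite normrM normfV normr_id; lra.
Qed.

Hypothesis dens : forall y (eta : R), 0 < eta -> exists m l, `|y - comb d m l| <= eta.

Lemma h_exists : exists h : nat -> Y -> R,
  [/\ (forall n a x y, h n (a *: x + y) = a * h n x + h n y),
      (forall n y, `|h n y| <= (C + 2 * delta) * `|y|),
      (forall n y, `|g n y| <= `|h n y| + 2 * delta * `|y|) &
      (forall y, h^~ y @ \oo --> (0 : R))].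
Proof.
have [N HN] := choice unif.
pose N' m := if m is 0 then 0%N else N m.
have HN' m n : (N' m <= n)%N -> forall l,
    `|g n (comb d m l)| <= 2 * delta * `|comb d m l|.
  case: m => [|m] /= h l; first by rewrite comb0 g0 !normr0 mulr0.
  exact: HN.
pose mm := mmf N'.
have d2 : 0 <= 2 * delta by rewrite mulr_ge0 // ltW.
have Hk n : exists k : Y -> R, [/\ (forall a x y, k (a *: x + y) = a * k x + k y),
   (forall l, k (comb d (mm n) l) = g n (comb d (mm n) l)) &
   (forall y, `|k y| <= 2 * delta * `|y|)].
  pose G0 := [set p : Y * R | exists l, p = (comb d (mm n) l, g n (comb d (mm n) l))].
  have bnd l : `|g n (comb d (mm n) l)| <= 2 * delta * `|comb d (mm n) l|.
    by apply: HN'; exact: mmf_ok.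
  have LG : lin_graph (2 * delta) G0.
    split.
    - by move=> z r r' [l1 [-> ->]] [l2 [E ->]]; rewrite E.
    - move=> a z1 r1 z2 r2 [l1 [-> ->]] [l2 [-> ->]].
      by exists (fun j => a * l1 j + l2 j); rewrite -comb_same glin.
    - by move=> z r [l [-> ->]]; exact: le_trans (ler_norm _) (bnd l).
  have G00 : G0 (0, 0) by exists (fun => 0); rewrite comb_zero g0.
  have [k [kl kG kb]] := hahn_banach d2 LG G00.
  by exists k; split => // l; apply: kG; exists l.
have [k Hk'] := choice Hk.
have hlin n a x y : g n (a *: x + y) - k n (a *: x + y) =
    a * (g n x - k n x) + (g n y - k n y).
  by have [kl _ _] := Hk' n; rewrite glin kl; ring.
have hb n y : `|g n y - k n y| <= (C + 2 * delta) * `|y|.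
  have [_ _ kb] := Hk' n; apply: le_trans (ler_normB _ _) _.
  by rewrite mulrDl; apply: lerD.
exists (fun n y => g n y - k n y); split => //.
- move=> n y; have [_ _ kb] := Hk' n.
  have := ler_normD (g n y - k n y) (k n y); rewrite subrK => h.
  by apply: le_trans h _; rewrite lerD2l.
- move=> y; apply/cvgrPdist_le => eta e0.
  have Cd : 0 < C + 2 * delta by move: C0 d2; lra.
  have [m [l hl]] := dens y (divr_gt0 e0 Cd).
  have [n0 Hn0] := mmf_unbounded N' m.
  exists n0 => // n /= Hn.
  have [kl kG kb] := Hk' n.
  have hmm := Hn0 n Hn.
  rewrite (comb_widen d l hmm) in hl.
  set u := comb d (mmf N' n) _ in hl.
  have [_ hD hB _] := linF_additive (hlin n).
  have -> : g n y - k n y = (g n (y - u) - k n (y - u)) + (g n u - k n u).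
    by rewrite -hD subrK.
  rewrite /u kG subrr addr0 sub0r normrN.
  apply: le_trans (hb n _) _.
  have -> : eta = (C + 2 * delta) * (eta / (C + 2 * delta)) by field; rewrite lt0r_neq0.
  by rewrite ler_wpM2l // ltW.
Qed.

End C0b.


Lemma g_limsup (R : realType) (X Y Z : normedModType R)
  (U : {linear X -> Z}) (V : {linear Y -> Z}) (T : X -> nat -> R) (C eps : R)
  (approx : forall y, `|y| <= 1 -> exists x, `|x| <= 1 /\ `|V y - U x| < eps)
  (Tc0 : forall x, T x @ \oo --> (0 : R))
  (F : nat -> Z -> R)
  (Flin : forall n a x y, F n (a *: x + y) = a * F n x + F n y)
  (FU : forall n x, F n (U x) = T x n) (Fb : forall n z, `|F n z| <= C * `|z|)
  (C0 : 0 < C) :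
  forall y (eta : R), 0 < eta ->
     exists N, forall n, (N <= n)%N -> `|F n (V y)| <= (C * eps) * `|y| + eta.
Proof.
move=> y eta e0.
have [x [xy hx]] := approx_scaled approx y.
have [N HN] := Tc0_ev Tc0 x e0.
exists N => n Nn.
have [_ FD _ _] := linF_additive (Flin n).
have -> : V y = U x + (V y - U x) by rewrite addrC subrK.
rewrite FD FU; apply: le_trans (ler_normD _ _) _.
rewrite addrC -mulrA; apply: lerD; last exact: HN.
apply: le_trans (Fb _ _) _; rewrite ler_wpM2l // ?ltW //.
Qed.

Lemma c0_part (R : realType) (X : completeNormedModType R) :
  iso_subspace_c0 X ->
     exists eps : R, 0 < eps /\
       forall Y : completeNormedModType R,
         (kadets_dist X Y < eps%:E)%E -> iso_subspace_c0 Y.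
Proof.
move=> [T [Tl [[c [C [c0 [C0 Tb]]]] Tc]]].
have [ep e8 pos1 pos3] := eps_facts c0 C0.
set eps := c / (8 * (c + 3 * C)) in ep e8 pos1 pos3 *.
exists eps; split => // Y hK.
have [Z [U [V [iU iV app]]]] := kadets_approx hK.
have Tlow x := (Tb x).1.
have Tup x := (Tb x).2.
have [F [Fl FU Fb]] := exists_F iU Tl C0 Tup.
pose g n y := F n (V y).
have glin : forall n a x y, g n (a *: x + y) = a * g n x + g n y.
  by move=> n a x y; rewrite /g linearP Fl.
have gb : forall n y, `|g n y| <= C * `|y| by move=> n y; rewrite /g -iV.
have glim := g_limsup app Tc Fl FU Fb C0.
have d0 : 0 < C * eps by rewrite mulr_gt0.
have dens := density iU iV Tl c0 e8 Tlow Tc app.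
have [h [hl hb hg hc]] := h_exists C0 d0 glin gb glim dens.
exists (fun y n => h n y); split; first by move=> a x y n; exact: hl.
split => //.
exists (c - (c + 3 * C) * eps), (C + 2 * (C * eps)); split => //.
split; first by move: C0 d0; lra.
move=> y; split; last by apply: sup_norm_le => n; exact: hb.
have := sup_norm_shift (F_lower iU iV c0 C0 Tlow app Fl FU Fb y) (hg^~ y).
apply: le_trans; rewrite lee_fin.
have : 0 <= `|y| by [].
nra.
Qed.

End KadetsAux.
Import KadetsAux.

Theorem proposition5p2 (R : realType) (X : completeNormedModType R) :
  (iso_subspace_c0 X ->
     exists eps : R, 0 < eps /\
       forall Y : completeNormedModType R,
         (kadets_dist X Y < eps%:E)%E -> iso_subspace_c0 Y) /\
  (iso_subspace_linf X ->
     exists eps : R, 0 < eps /\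
       forall Y : completeNormedModType R,
         (kadets_dist X Y < eps%:E)%E -> iso_subspace_linf Y).
Proof. split; [exact: c0_part | exact: linf_part]. Qed.
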